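(* There is an absolute constant $c>0$ such that the following holds. Let $A$ and $B$ be finite nonempty sets of real numbers, and suppose $A$ has distinct consecutive differences. Then \[ |A+B| \ge c\,|A|\,|B|^{1/2}. \] In particular, if $|A|=|B|$ then $|A+B|\ge c|A|^{3/2}$.
   Context: For finite $A,B\subset\mathbb{R}$, $A+B=\{a+b: a\in A, b\in B\}$. Writing $A=\{a_1<a_2<\dots<a_k\}$, the set $A$ has distinct consecutive differences if for $1\le i,j\le k-1$, $a_{i+1}-a_i=a_{j+1}-a_j$ implies $i=j$. *)

(* Defs.v *)
(* finite sets of reals are represented by duplicate-free lists. *)
From Stdlib Require Import Reals List.
Import ListNotations.
Open Scope R_scope.

Definition sumset (A B : list R) : list R :=
  flat_map (fun a => map (fun b => a + b) B) A.

Definition card (S : list R) : nat := length (nodup Req_EM_T S).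

Definition consecutive (A : list R) (x y : R) : Prop :=
  In x A /\ In y A /\ x < y /\ (forall z, In z A -> ~ (x < z /\ z < y)).

Definition distinct_consec_diffs (A : list R) : Prop :=
  forall x1 y1 x2 y2, consecutive A x1 y1 -> consecutive A x2 y2 ->
    y1 - x1 = y2 - x2 -> x1 = x2.

(* Main.v *)
Require Import Defs.
From Stdlib Require Import Reals List Lia.
Import ListNotations.
Open Scope R_scope.

Section Gen.
Context {X : Type}.

Definition sumf (g : X -> nat) (l : list X) : nat :=
  fold_right (fun x acc => (g x + acc)%nat) 0%nat l.
Definition cnt (f : X -> bool) (l : list X) : nat :=
  sumf (fun x => if f x then 1%nat else 0%nat) l.

Lemma cnt_length f l : cnt f l = length (filter f l).
Proof. induction l as [|a l IH]; simpl; auto. unfold cnt in *; simpl. destruct (f a); simpl; lia. Qed.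

Lemma sumf_le (g h : X -> nat) l : (forall x, In x l -> (g x <= h x)%nat) -> (sumf g l <= sumf h l)%nat.
Proof. induction l as [|a l IH]; simpl; intros H; auto. 
  assert (g a <= h a)%nat by (apply H; auto). assert (sumf g l <= sumf h l)%nat by (apply IH; auto). lia. Qed.

Lemma sumf_ext (g h : X -> nat) l : (forall x, In x l -> g x = h x) -> sumf g l = sumf h l.
Proof. intros H; apply Nat.le_antisymm; apply sumf_le; intros x Hx; rewrite H; auto. Qed.

Lemma sumf_plus (g h : X -> nat) l : sumf (fun x => g x + h x)%nat l = (sumf g l + sumf h l)%nat.
Proof. induction l; simpl; lia. Qed.

Lemma sumf_scal c (g : X -> nat) l : sumf (fun x => c * g x)%nat l = (c * sumf g l)%nat.
Proof. induction l; simpl; lia. Qed.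

Lemma sumf_const1 l : sumf (fun _ => 1%nat) l = length l.
Proof. induction l; simpl; lia. Qed.

Lemma sumf_app (g : X -> nat) l1 l2 : sumf g (l1 ++ l2) = (sumf g l1 + sumf g l2)%nat.
Proof. induction l1; simpl; lia. Qed.

Lemma cnt_split (f g h : X -> bool) (l : list X) : (forall x, In x l -> (if f x then 1 else 0) = (if g x then 1 else 0) + (if h x then 1 else 0))%nat ->
  cnt f l = (cnt g l + cnt h l)%nat.
Proof. intros H. unfold cnt. rewrite <- sumf_plus. apply sumf_ext; auto. Qed.

Lemma cnt_zero (f : X -> bool) l : (forall x, In x l -> f x = false) -> cnt f l = 0%nat.
Proof. intros H. unfold cnt. transitivity (sumf (fun _ => 0%nat) l).
  apply sumf_ext. intros x Hx; rewrite H; auto. clear H; induction l; simpl; auto. Qed.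

Lemma cnt_le1 (f : X -> bool) l : NoDup l -> (forall x y, In x l -> In y l -> f x = true -> f y = true -> x = y) -> (cnt f l <= 1)%nat.
Proof. induction l as [|a l IH]; intros Hn H; [unfold cnt; simpl; lia|].
  change (cnt f (a::l)) with ((if f a then 1 else 0) + cnt f l)%nat.
  inversion Hn; subst. destruct (f a) eqn:Ea.
  - rewrite (cnt_zero f l). lia. intros y Hy. destruct (f y) eqn:Ey; auto. exfalso.
    assert (a = y) by (apply H; simpl; auto). subst; contradiction.
  - simpl. apply IH; auto. intros; apply H; simpl; auto. Qed.

Lemma cnt_pos (f : X -> bool) l x : In x l -> f x = true -> (1 <= cnt f l)%nat.
Proof. induction l as [|a l IH]; simpl; intros Hi Hf; [contradiction|]. unfold cnt in *; simpl.
  destruct Hi as [<-|Hi]. rewrite Hf; lia. specialize (IH Hi Hf). destruct (f a); lia. Qed.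

Lemma cnt_mono (f g : X -> bool) l : (forall x, In x l -> f x = true -> g x = true) -> (cnt f l <= cnt g l)%nat.
Proof. intros H; apply sumf_le. intros x Hx. destruct (f x) eqn:E; [rewrite (H x Hx E)|]; destruct (g x); lia. Qed.

Lemma cnt_lt (f g : X -> bool) l x0 : (forall x, In x l -> f x = true -> g x = true) -> In x0 l -> g x0 = true -> f x0 = false ->
  (cnt f l < cnt g l)%nat.
Proof. induction l as [|a l IH]; simpl; intros H Hi Hg Hf; [contradiction|]. unfold cnt in *; simpl.
  destruct Hi as [<-|Hi].
  - rewrite Hg, Hf. assert (cnt f l <= cnt g l)%nat by (apply cnt_mono; auto). unfold cnt in *; lia.
  - assert (sumf (fun x => if f x then 1 else 0)%nat l < sumf (fun x => if g x then 1 else 0)%nat l)%nat by (apply IH; auto).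
    destruct (f a) eqn:E; [rewrite (H a (or_introl eq_refl) E)|]; destruct (g a); lia. Qed.

Lemma sumf_flat_map {Y} (g : X -> nat) (h : Y -> list X) l : sumf g (flat_map h l) = fold_right (fun y acc => sumf g (h y) + acc)%nat 0%nat l.
Proof. induction l; simpl; auto. rewrite sumf_app; lia. Qed.

End Gen.

Lemma exchange {X Y} (f : X -> Y -> bool) (L : list X) (S : list Y) :
  sumf (fun x => cnt (f x) S) L = sumf (fun s => cnt (fun x => f x s) L) S.
Proof. induction L as [|a L IH]; simpl.
  - induction S; simpl; auto.
  - rewrite IH. unfold cnt at 1. rewrite <- sumf_plus. apply sumf_ext. intros s _. unfold cnt; simpl. lia. Qed.

Lemma key {X} (P : list X) (t : X -> nat) n M :
  (1 <= n)%nat -> (forall p, In p P -> (1 <= t p)%nat) ->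
  (forall tau, (cnt (fun p => Nat.eqb (t p) tau) P <= n)%nat) -> (sumf t P <= M)%nat ->
  (length P * length P <= 4 * n * M)%nat.
Proof. intros Hn Ht Hf Hs. set (N := length P).
  assert (A1 : forall T, (cnt (fun p => Nat.leb (t p) T) P <= n * T)%nat).
  { induction T.
    - rewrite cnt_zero. lia. intros x Hx. specialize (Ht x Hx). apply Nat.leb_gt. lia.
    - rewrite (cnt_split _ (fun p => Nat.leb (t p) T) (fun p => Nat.eqb (t p) (S T))).
      specialize (Hf (S T)). lia.
      intros x _. destruct (Nat.leb_spec (t x) (S T)), (Nat.leb_spec (t x) T), (Nat.eqb_spec (t x) (S T)); lia. }
  assert (A2 : forall T, (cnt (fun p => Nat.leb (t p) T) P + cnt (fun p => negb (Nat.leb (t p) T)) P = N)%nat).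
  { intros T. rewrite <- (cnt_split (fun _ => true)). unfold cnt, N; rewrite <- sumf_const1. reflexivity.
    intros x _. destruct (Nat.leb (t x) T); simpl; lia. }
  assert (A3 : forall T, ((T+1) * cnt (fun p => negb (Nat.leb (t p) T)) P <= M)%nat).
  { intros T. eapply Nat.le_trans; [|exact Hs]. unfold cnt. rewrite <- sumf_scal. apply sumf_le.
    intros x _. destruct (Nat.leb_spec (t x) T); simpl; lia. }
  set (T := (N / (2*n))%nat).
  assert (D := Nat.div_mod N (2*n) ltac:(lia)). assert (Dm := Nat.mod_upper_bound N (2*n) ltac:(lia)).
  fold T in D. specialize (A1 T). specialize (A2 T). specialize (A3 T).
  set (c1 := cnt (fun p => Nat.leb (t p) T) P) in *.
  set (c2 := cnt (fun p => negb (Nat.leb (t p) T)) P) in *.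
  assert (E1 : (N <= 2 * c2)%nat) by nia.
  assert (E2 : (N <= 2 * n * (T+1))%nat) by nia.
  assert (E3 : (N * N <= (2*n*(T+1)) * (2*c2))%nat) by (apply Nat.mul_le_mono; auto).
  nia.
Qed.
From Stdlib Require Import Reals List Lia Lra.
Import ListNotations.
Open Scope R_scope.

Definition Rltb (x y : R) : bool := if Rlt_dec x y then true else false.
Definition Rleb (x y : R) : bool := if Rle_dec x y then true else false.
Lemma Rltb_iff x y : Rltb x y = true <-> x < y.
Proof. unfold Rltb; destruct (Rlt_dec x y); split; intros; auto; discriminate. Qed.
Lemma Rleb_iff x y : Rleb x y = true <-> x <= y.
Proof. unfold Rleb; destruct (Rle_dec x y); split; intros; auto; discriminate. Qed.

Definition minl (l : list R) : R := match l with nil => 0 | z :: zs => fold_right Rmin z zs end.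

Lemma minl_prop z zs : In (minl (z::zs)) (z::zs) /\ forall w, In w (z::zs) -> minl (z::zs) <= w.
Proof. simpl. induction zs as [|a zs IH]; simpl.
  - split; auto. intros w [<-|[]]; lra.
  - destruct IH as [I1 I2]. set (r := fold_right Rmin z zs) in *. split.
    + destruct (Rle_dec a r). rewrite Rmin_left by lra. simpl; auto.
      rewrite Rmin_right by lra. simpl in *; tauto.
    + intros w Hw. assert (Rmin a r <= a) by apply Rmin_l.
      assert (Rmin a r <= r) by apply Rmin_r.
      simpl in Hw. destruct Hw as [Hw|[Hw|Hw]]; [subst w|subst w|].
      * specialize (I2 z (or_introl eq_refl)); lra.
      * lra.
      * specialize (I2 w (or_intror Hw)); lra. Qed.

Definition ups (A : list R) (x : R) := filter (Rltb x) A.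
Definition succ (A : list R) (x : R) := minl (ups A x).
Definition hasup (A : list R) (x : R) : bool := match ups A x with nil => false | _ => true end.

Lemma succ_prop A x : hasup A x = true -> In (succ A x) A /\ x < succ A x /\ forall z, In z A -> x < z -> succ A x <= z.
Proof. unfold hasup, succ. destruct (ups A x) as [|z zs] eqn:E; [discriminate|]. intros _.
  destruct (minl_prop z zs) as [I1 I2]. rewrite <- E in I1, I2. unfold ups in I1.
  apply filter_In in I1. destruct I1 as [I1 I3]. apply Rltb_iff in I3. rewrite <- E. unfold ups in *. repeat split; auto.
  intros w Hw Hxw. apply I2. unfold ups; apply filter_In; split; auto. apply Rltb_iff; auto. Qed.

Lemma nohasup A x : hasup A x = false -> forall z, In z A -> ~ x < z.
Proof. unfold hasup. destruct (ups A x) eqn:E; [|discriminate]. intros _ z Hz Hl.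
  assert (In z (ups A x)) by (unfold ups; apply filter_In; split; auto; apply Rltb_iff; auto).
  rewrite E in H; contradiction. Qed.

Lemma succ_consec A x : In x A -> hasup A x = true -> consecutive A x (succ A x).
Proof. intros Hx H. destruct (succ_prop A x H) as [I1 [I2 I3]]. repeat split; auto.
  intros z Hz [H1 H2]. specialize (I3 z Hz H1). lra. Qed.

Lemma NoDup_prod {X Y} (l1 : list X) (l2 : list Y) : NoDup l1 -> NoDup l2 -> NoDup (list_prod l1 l2).
Proof. induction l1 as [|a l1 IH]; simpl; intros H1 H2. constructor. inversion H1; subst.
  apply NoDup_app; auto.
  - apply NoDup_map_NoDup_ForallPairs; auto. intros u v _ _ E. inversion E; auto.
  - intros [u v] Hu Hv. apply in_map_iff in Hu. destruct Hu as [w [E _]]. inversion E; subst.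
    apply in_prod_iff in Hv. tauto. Qed.

Definition inI (u v s : R) : bool := Rltb u s && Rleb s v.
Lemma inI_iff u v s : inI u v s = true <-> u < s /\ s <= v.
Proof. unfold inI. rewrite Bool.andb_true_iff, Rltb_iff, Rleb_iff. tauto. Qed.

Lemma cnt_strict S s y y' : In y' S -> s < y -> y < y' -> (cnt (inI s y) S < cnt (inI s y') S)%nat.
Proof. intros H1 H2 H3. apply (cnt_lt _ _ _ y'); auto.
  - intros z _ Hz. apply inI_iff in Hz. apply inI_iff. lra.
  - apply inI_iff; lra.
  - destruct (inI s y y') eqn:E; auto. apply inI_iff in E; lra. Qed.

Lemma sumf_map {X Y} (g : Y -> nat) (f : X -> Y) l : sumf g (map f l) = sumf (fun x => g (f x)) l.
Proof. induction l; simpl; auto. Qed.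

Lemma sumf_prod {X Y} (t : X * Y -> nat) B L n : (forall b, In b B -> (sumf (fun x => t (b,x)) L <= n)%nat) ->
  (sumf t (list_prod B L) <= length B * n)%nat.
Proof. induction B as [|b B IH]; simpl; intros H; [lia|]. rewrite sumf_app, sumf_map.
  assert (sumf (fun x => t (b,x)) L <= n)%nat by (apply H; auto).
  assert (sumf t (list_prod B L) <= length B * n)%nat by (apply IH; auto). lia. Qed.

Theorem theorem1 :
  exists c : R, 0 < c /\
    forall A B : list R,
      NoDup A -> NoDup B -> A <> nil -> B <> nil ->
      distinct_consec_diffs A ->
      INR (card (sumset A B)) >= c * INR (length A) * sqrt (INR (length B)).
Proof.
  exists (1/4). split; [lra|]. intros A B HA HB HAn HBn Hd.
  set (S := nodup Req_EM_T (sumset A B)).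
  assert (inS : forall a b, In a A -> In b B -> In (a+b) S).
  { intros a b Ha Hb. unfold S. apply nodup_In. unfold sumset. apply in_flat_map. exists a. split; auto.
    apply in_map_iff. exists b; auto. }
  assert (HSn : NoDup S) by apply NoDup_nodup.
  unfold card. fold S. set (n := length S). set (k := length A). set (m := length B).
  assert (Hk : (1 <= k)%nat) by (unfold k; destruct A; [congruence|simpl; lia]).
  assert (Hex : exists a0, In a0 A) by (destruct A; [congruence| eexists; left; eauto]).
  destruct Hex as [a0 Ha0].
  assert (Hmn : (m <= n)%nat).
  { unfold m, n. rewrite <- (length_map (fun b => a0 + b) B). apply NoDup_incl_length.
    apply NoDup_map_NoDup_ForallPairs; auto. intros u v _ _ E; lra.
    intros s Hs. apply in_map_iff in Hs. destruct Hs as [b [<- Hb]]. auto. }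
  assert (Hm : (1 <= m)%nat) by (unfold m; destruct B; [congruence|simpl; lia]).
  set (L := filter (hasup A) A).
  assert (HL : (k <= length L + 1)%nat).
  { unfold L. rewrite <- cnt_length.
    assert (E := cnt_split (fun _ => true) (hasup A) (fun x => negb (hasup A x)) A).
    assert (cnt (fun _ => true) A = k). { unfold cnt, k. rewrite <- sumf_const1. reflexivity. }
    assert (cnt (fun x => negb (hasup A x)) A <= 1)%nat.
    { apply cnt_le1; auto. intros x y Hx Hy Ex Ey. apply Bool.negb_true_iff in Ex, Ey.
      pose proof (nohasup A x Ex y Hy). pose proof (nohasup A y Ey x Hx). lra. }
    assert (cnt (fun _ => true) A = cnt (hasup A) A + cnt (fun x => negb (hasup A x)) A)%nat.
    { apply E. intros x _. destruct (hasup A x); simpl; lia. }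
    lia. }
  set (P := list_prod B L).
  set (t := fun p : R * R => let (b, x) := p in cnt (inI (x+b) (succ A x + b)) S).
  assert (HLin : forall x, In x L -> In x A /\ hasup A x = true).
  { intros x Hx. unfold L in Hx. apply filter_In in Hx. auto. }
  assert (Hkey : (length P * length P <= 4 * n * (m * n))%nat).
  { apply (key P t).
    - lia.
    - intros [b x] Hp. apply in_prod_iff in Hp. destruct Hp as [Hb Hx]. destruct (HLin x Hx) as [Hx1 Hx2].
      destruct (succ_prop A x Hx2) as [I1 [I2 I3]]. simpl.
      apply (cnt_pos _ _ (succ A x + b)). apply inS; auto. apply inI_iff. lra.
    - intros tau. rewrite cnt_length. unfold n.
      set (F := filter (fun p => Nat.eqb (t p) tau) P).
      rewrite <- (length_map (fun p => snd p + fst p) F). apply NoDup_incl_length.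
      + apply NoDup_map_NoDup_ForallPairs.
        * intros [b x] [b' x'] H1 H2 Heq. simpl in Heq. unfold F in H1, H2.
          apply filter_In in H1, H2. destruct H1 as [H1 T1], H2 as [H2 T2].
          apply Nat.eqb_eq in T1, T2. unfold P in H1, H2. apply in_prod_iff in H1, H2.
          destruct H1 as [Hb Hx], H2 as [Hb' Hx'].
          destruct (HLin x Hx) as [Hx1 Hx2], (HLin x' Hx') as [Hx1' Hx2'].
          destruct (succ_prop A x Hx2) as [I1 [I2 I3]].
          destruct (succ_prop A x' Hx2') as [I1' [I2' I3']].
          simpl in T1, T2. rewrite <- Heq in T2.
          assert (Ey : succ A x + b = succ A x' + b').
          { destruct (Rtotal_order (succ A x + b) (succ A x' + b')) as [Hl|[He|Hl]]; auto.
            - exfalso. assert (Hc := cnt_strict S (x+b) (succ A x + b) (succ A x' + b') (inS _ _ I1' Hb') ltac:(lra) Hl). lia.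
            - exfalso. assert (Hc := cnt_strict S (x+b) (succ A x' + b') (succ A x + b) (inS _ _ I1 Hb) ltac:(lra) Hl). lia. }
          assert (x = x').
          { apply (Hd x (succ A x) x' (succ A x')); try apply succ_consec; auto. lra. }
          subst x'. f_equal. lra.
        * apply NoDup_filter. apply NoDup_prod; auto. apply NoDup_filter; auto.
      + intros s Hs. apply in_map_iff in Hs. destruct Hs as [[b x] [<- Hp]].
        unfold F in Hp. apply filter_In in Hp. destruct Hp as [Hp _]. apply in_prod_iff in Hp.
        destruct Hp as [Hb Hx]. destruct (HLin x Hx). simpl. apply inS; auto.
    - apply sumf_prod. intros b Hb. simpl.
      rewrite (exchange (fun x s => inI (x+b) (succ A x + b) s)).
      unfold n. rewrite <- sumf_const1. apply sumf_le. intros s Hs. apply cnt_le1.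
      + apply NoDup_filter; auto.
      + intros x y Hx Hy E1 E2. apply inI_iff in E1, E2.
        destruct (HLin x Hx) as [Hx1 Hx2], (HLin y Hy) as [Hy1 Hy2].
        destruct (succ_prop A x Hx2) as [I1 [I2 I3]].
        destruct (succ_prop A y Hy2) as [J1 [J2 J3]].
        destruct (Rtotal_order x y) as [Hl|[He|Hl]]; auto.
        * specialize (I3 y Hy1 Hl). lra.
        * specialize (J3 x Hx1 Hl). lra. }
  unfold P in Hkey. rewrite length_prod in Hkey. fold m in Hkey. set (l := length L) in *.
  assert (H1 : (m * (m * (l * l)) <= m * (4 * (n * n)))%nat) by nia.
  apply Nat.mul_le_mono_pos_l in H1; [|lia].
  assert (H2 : (k * k * m <= 16 * n * n)%nat).
  { destruct (Nat.eq_dec k 1) as [->|Hk2].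
    - assert (n <= n * n)%nat by nia. lia.
    - assert (Hkl : (k <= 2 * l)%nat) by lia.
      assert (k * k <= (2*l)*(2*l))%nat by (apply Nat.mul_le_mono; auto).
      assert (k * k * m <= (2*l)*(2*l)*m)%nat by (apply Nat.mul_le_mono_r; auto).
      lia. }
  apply le_INR in H2. rewrite !mult_INR in H2.
  assert (Hr := sqrt_sqrt (INR m) (pos_INR m)). assert (Hr0 := sqrt_pos (INR m)).
  set (r := sqrt (INR m)) in *. rewrite <- Hr in H2.
  assert (0 <= INR n) by apply pos_INR. assert (0 <= INR k) by apply pos_INR.
  simpl in H2. nra.
Qed.
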